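(* Let $S=\{V^0,V^1,V^2\}$ be a partition of $V(T_A)$ into three classes and $\sigma$ an ordering of $V(T_A)$ such that $S$ and $\sigma$ are strongly consistent. Then none of the induced subgraphs $T_A[V^0]$, $T_A[V^1]$, $T_A[V^2]$ is connected. Moreover, for every simple path $C_0$ in $T_A$, the graph $T_A-V(C_0)$ has proper thinness equal to $3$.
   Context: For a graph $G=(V,E)$, a linear ordering $<$ of $V$ and a partition of $V$ into classes are called strongly consistent if for every triple $r<s<t$ of vertices with $rt\in E$: if $r$ and $s$ belong to the same class then $st\in E$, and if $s$ and $t$ belong to the same class then $rs\in E$. The proper thinness $\mathrm{pthin}(G)$ is the minimum $k$ such that some ordering of $V$ and some partition of $V$ into $k$ classes are strongly consistent. $T_0$ is the subdivided star $K_{1,5}$: a center adjacent to five vertices, each of which is adjacent to one further leaf (11 vertices). $T_A$ is the tree obtained from three disjoint copies of $T_0$ and a new vertex $v_0$ by making $v_0$ adjacent to one leaf of each copy. $G[X]$ denotes the induced subgraph on $X$ and $G-X$ the induced subgraph on $V(G)\setminus X$. *)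

(* Defs.v *)
From mathcomp Require Import all_boot.
Set Implicit Arguments. Unset Strict Implicit. Unset Printing Implicit Defensive.

(* A simple graph is a symmetric irreflexive relation e on a finType T.
   Subgraphs are induced subgraphs on a vertex set X : {set T}. *)

(* A linear ordering of X is given by an injective rank function
   ord : T -> nat (r < s in the ordering iff ord r < ord s); a partition of X
   into (at most) k classes is given by a class map cls : T -> 'I_k. *)
Definition strongly_consistent (T : finType) (e : rel T) (X : {set T}) (k : nat)
  (ord : T -> nat) (cls : T -> 'I_k) : Prop :=
  {in X &, injective ord} /\
  forall r s t, r \in X -> s \in X -> t \in X ->
    ord r < ord s -> ord s < ord t -> e r t ->
    (cls r = cls s -> e s t) /\ (cls s = cls t -> e r s).

Definition has_pthin_at_most (T : finType) (e : rel T) (X : {set T}) (k : nat) : Prop :=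
  exists (ord : T -> nat) (cls : T -> 'I_k), strongly_consistent e X ord cls.

Definition pthin_eq (T : finType) (e : rel T) (X : {set T}) (k : nat) : Prop :=
  has_pthin_at_most e X k /\ forall j, j < k -> ~ has_pthin_at_most e X j.

Definition induced_connected (T : finType) (e : rel T) (X : {set T}) : Prop :=
  X != set0 /\
  forall x y, x \in X -> y \in X ->
    connect (fun u v => [&& e u v, u \in X & v \in X]) x y.

(* The tree T_A on 34 vertices 0..33.
   Copy c (c = 0,1,2) of T_0 uses vertices 11c + i, i = 0..10:
   11c is the center, 11c+1..11c+5 its neighbours, and 11c+i+5 is the leaf
   attached to 11c+i (i = 1..5).  Vertex 33 is v_0, adjacent to the leaf
   11c+6 of each copy. *)
Definition in_copy_adj (i j : nat) : bool :=
  [|| (i == 0) && (0 < j <= 5),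
      (j == 0) && (0 < i <= 5),
      (0 < i <= 5) && (j == i + 5)
    | (0 < j <= 5) && (i == j + 5)].

Definition TA_adj_nat (a b : nat) : bool :=
  [|| [&& a < 33, b < 33, a %/ 11 == b %/ 11 & in_copy_adj (a %% 11) (b %% 11)],
      [&& a == 33, b < 33 & b %% 11 == 6]
    | [&& b == 33, a < 33 & a %% 11 == 6]].

Definition TA : rel 'I_34 := fun u v => TA_adj_nat u v.

(* Main.v *)
Require Import Defs.
From mathcomp Require Import all_boot.
From mathcomp Require Import zify.
Set Implicit Arguments. Unset Strict Implicit. Unset Printing Implicit Defensive.
Definition nbr_table : seq (seq nat) := [:: [:: 1; 2; 3; 4; 5]; [:: 0; 6]; [:: 0; 7]; [:: 0; 8]; [:: 0; 9]; [:: 0; 10]; [:: 1; 33]; [:: 2]; [:: 3]; [:: 4]; [:: 5]; [:: 12; 13; 14; 15; 16]; [:: 11; 17]; [:: 11; 18]; [:: 11; 19]; [:: 11; 20]; [:: 11; 21]; [:: 12; 33]; [:: 13]; [:: 14]; [:: 15]; [:: 16]; [:: 23; 24; 25; 26; 27]; [:: 22; 28]; [:: 22; 29]; [:: 22; 30]; [:: 22; 31]; [:: 22; 32]; [:: 23; 33]; [:: 24]; [:: 25]; [:: 26]; [:: 27]; [:: 6; 17; 28]].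
Definition adjF (a b : nat) : bool := b \in nth [::] nbr_table a.

Fixpoint hasL (T : Type) (p : T -> bool) (s : seq T) : bool :=
  match s with [::] => false | x :: s' => if p x then true else hasL p s' end.

Lemma hasLE (T : Type) (p : T -> bool) s : hasL p s = has p s.
Proof. by elim: s => //= x s ->; case: (p x). Qed.

Section Search.
Variable adj : nat -> nat -> bool.
Variable allowed : seq nat.
Variable L : seq nat.

Fixpoint pairs_ok (P : seq (nat*nat)) (t c : nat) : bool :=
  match P with
  | [::] => true
  | (r,cr) :: P' =>
     (adj r t ==> all (fun sc => ((cr == sc.2) ==> adj sc.1 t) && ((sc.2 == c) ==> adj r sc.1)) P')
     && pairs_ok P' t c
  end.
Definition fwd_ok (P : seq (nat*nat)) t c R :=
  all (fun rc => all (fun u => adj rc.1 u ==> (rc.2 == c) ==> adj t u) R) P.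
Fixpoint killed (u : nat) (Q : seq (nat*nat)) : seq nat :=
  match Q with
  | [::] => [::]
  | (v,cv)::Q' => (if adj v u then [seq w.2 | w <- Q' & ~~ adj v w.1] else [::]) ++ killed u Q'
  end.
Definition dom_ok Q R := all (fun u => has (fun c' => c' \notin killed u Q) allowed) R.
Definition ok_step P t c R :=
  if c \in allowed then if pairs_ok P t c then if fwd_ok P t c R then dom_ok (rcons P (t,c)) R else false else false else false.

Fixpoint search (fuel : nat) (P : seq (nat*nat)) : bool :=
  let R := [seq v <- L | v \notin map fst P] in
  if R is [::] then true else
  if fuel is m.+1 then
    hasL (fun t => hasL (fun c => if ok_step P t c [seq u <- R | u != t] then search m (rcons P (t,c)) else false) allowed) R
  else false.

Lemma searchS m P : search m.+1 P =
  let R := [seq v <- L | v \notin map fst P] in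
  if R is [::] then true else
    has (fun t => has (fun c => ok_step P t c [seq u <- R | u != t] && search m (rcons P (t,c))) allowed) R.
Proof.
rewrite /=; case: [seq v <- L | v \notin map fst P] => // x s.
rewrite hasLE; apply: eq_has => t; rewrite hasLE; apply: eq_has => c //.
Qed.

Lemma pairs_okP (P : seq (nat*nat)) t c :
  (forall i j, i < j -> j < size P -> adj (nth (0,0) P i).1 t ->
     ((nth (0,0) P i).2 = (nth (0,0) P j).2 -> adj (nth (0,0) P j).1 t) /\
     ((nth (0,0) P j).2 = c -> adj (nth (0,0) P i).1 (nth (0,0) P j).1)) ->
  pairs_ok P t c.
Proof.
elim: P => [//|[r cr] P IH] H /=; apply/andP; split.
- apply/implyP => art; apply/allP => [[s cs]] sin.
  have := H 0 (index (s,cs) P).+1 erefl.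
  rewrite /= ltnS index_mem sin nth_index // => /(_ erefl art) [h1 h2].
  by apply/andP; split; apply/implyP => /eqP; [exact: h1 | exact: h2].
- by apply: IH => i j ij jlt; exact: (H i.+1 j.+1).
Qed.

Lemma fwd_okP (P : seq (nat*nat)) t c R :
  (forall i u, i < size P -> u \in R -> adj (nth (0,0) P i).1 u -> (nth (0,0) P i).2 = c -> adj t u) ->
  fwd_ok P t c R.
Proof.
move=> H; apply/allP => rc rcin; apply/allP => u uin; apply/implyP => a; apply/implyP => /eqP e.
by apply: (H (index rc P) u); rewrite ?index_mem ?nth_index.
Qed.

Lemma killedP u Q c' : c' \in killed u Q -> exists i j, [/\ i < j, j < size Q,
  adj (nth (0,0) Q i).1 u, (nth (0,0) Q j).2 = c' & ~~ adj (nth (0,0) Q i).1 (nth (0,0) Q j).1].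
Proof.
elim: Q => [//|[v cv] Q IH] /=; rewrite mem_cat => /orP [|].
- case: ifP => // avu /mapP [w]; rewrite mem_filter => /andP [na win] ->.
  exists 0, (index w Q).+1; rewrite /=.
  by split => //; rewrite ?ltnS ?index_mem ?nth_index.
- by move/IH => [i [j [ij jl a e na]]]; exists i.+1, j.+1.
Qed.

Lemma dom_okP Q R :
  (forall u, u \in R -> exists2 c', c' \in allowed & forall i j, i < j -> j < size Q ->
     adj (nth (0,0) Q i).1 u -> (nth (0,0) Q j).2 = c' -> adj (nth (0,0) Q i).1 (nth (0,0) Q j).1) ->
  dom_ok Q R.
Proof.
move=> H; apply/allP => u uin; case: (H u uin) => c' ca Hc; apply/hasP; exists c' => //.
by apply/negP => /killedP [i [j [ij jl a e na]]]; rewrite (Hc i j ij jl a e) in na.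
Qed.

Definition Good (F : seq nat) (f : nat -> nat) := forall i j k, i < j -> j < k -> k < size F ->
  adj (nth 0 F i) (nth 0 F k) ->
  (f (nth 0 F i) = f (nth 0 F j) -> adj (nth 0 F j) (nth 0 F k)) /\
  (f (nth 0 F j) = f (nth 0 F k) -> adj (nth 0 F i) (nth 0 F j)).

Section Complete.
Variable F : seq nat.
Variable f : nat -> nat.
Hypothesis uF : uniq F.
Hypothesis FL : forall v, (v \in F) = (v \in L).
Hypothesis GF : Good F f.
Hypothesis fA : forall v, v \in F -> f v \in allowed.

Definition PP n := [seq (v, f v) | v <- take n F].

Lemma map_fst_PP n : map fst (PP n) = take n F.
Proof. by rewrite /PP; elim: (take n F) => //= x s ->. Qed.

Lemma size_PP n : n <= size F -> size (PP n) = n.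
Proof. by move=> h; rewrite size_map size_take_min; apply/minn_idPl. Qed.

Lemma nth_PP n i : i < n -> n <= size F -> nth (0,0) (PP n) i = (nth 0 F i, f (nth 0 F i)).
Proof.
move=> lt le; rewrite (nth_map 0); last by rewrite size_take_min leq_min lt (leq_trans lt le).
by rewrite nth_take.
Qed.

Lemma mem_takeF u n : u \in F -> (u \in take n F) = (index u F < n).
Proof.
move=> uin; apply/idP/idP.
- move=> /(nthP 0) [i]; rewrite size_take_min leq_min => /andP [lin lis].
  rewrite nth_take // => <-; by rewrite index_uniq.
- move=> lt; rewrite -(nth_index 0 uin) -(nth_take _ lt); apply: mem_nth.
  by rewrite size_take_min leq_min lt index_mem uin.
Qed.

Lemma main_ind k : forall n, size F - n = k -> n <= size F -> forall m, k < m -> search m (PP n) = true.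
Proof.
elim: k => [|k IH] n Hk Hn [//|m] Hm; rewrite searchS /=; rewrite map_fst_PP.
- have -> : n = size F by lia.
  rewrite take_size.
  suff -> : [seq v <- L | v \notin F] = [::] by [].
  apply/eqP; rewrite -[_ == _]negbK -has_filter; apply/hasPn => v vL; by rewrite negbK FL.
- have nlt : n < size F by lia.
  set t := nth 0 F n.
  have tF : t \in F by apply: mem_nth.
  have tR : t \in [seq v <- L | v \notin take n F].
    by rewrite mem_filter -FL tF mem_takeF // index_uniq // ltnn.
  case E : [seq v <- L | v \notin take n F] => [|x s]; first by rewrite E in tR.
  rewrite -E; apply/hasP; exists t => //; apply/hasP; exists (f t); first exact: fA.
  have Rp : forall u, u \in [seq u <- [seq v <- L | v \notin take n F] | u != t] ->
      u \in F /\ n < index u F < size F.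
    move=> u; rewrite !mem_filter -FL => /and3P [ut ntk uF'].
    rewrite (mem_takeF _ uF') -leqNgt leq_eqVlt in ntk.
    split=> //; rewrite index_mem uF' andbT; case/orP: ntk => // /eqP e.
    by move: ut; rewrite /t e nth_index // eqxx.
  apply/andP; split.
  + rewrite /ok_step fA // (@pairs_okP (PP n) t (f t)); last first.
      move=> i j ij; rewrite size_PP // => jn.
      rewrite !nth_PP // ?(ltn_trans ij) //= => a.
      exact: (GF ij jn nlt a).
    rewrite (@fwd_okP (PP n) t (f t)); last first.
      move=> i u; rewrite size_PP // => ilt /Rp [uF' /andP [nk ks]].
      rewrite nth_PP //= => a e.
      have := GF ilt nk ks; rewrite nth_index //; move/(_ a) => [h _]; exact: h e.
    apply: dom_okP => u /Rp [uF' /andP [nk ks]]; exists (f u); first exact: fA.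
    move=> i j ij; rewrite -cats1 size_cat size_PP //= addn1 => jn1.
    rewrite !nth_cat size_PP // .
    have jk : j < index u F by apply: leq_ltn_trans nk.
    case: (ltnP j n) => jn.
      rewrite ifT ?(ltn_trans ij jn) // !nth_PP ?(ltn_trans ij jn) //= => a e.
      have := GF ij jk ks; rewrite nth_index //; move/(_ a) => [_ h]; exact: h e.
    have ej : j = n by lia.
    subst j.
    rewrite subnn ij nth_PP //= => a e.
    have := GF ij jk ks; rewrite nth_index //; move/(_ a) => [_ h]; exact: h e.
  + have -> : rcons (PP n) (t, f t) = PP n.+1 by rewrite /PP (take_nth 0 nlt) map_rcons.
    apply: (IH n.+1) => //; lia.
Qed.

Theorem search_complete m : size F < m -> search m [::] = true.
Proof. move=> h; have := @main_ind (size F) 0; rewrite subn0 /PP take0 /=; apply => //. Qed.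
End Complete.
End Search.

Lemma core0_0 : search adjF [:: 1; 2] (iota 0 11) 12 [::] = false. Proof. vm_cast_no_check (erefl false). Qed.
Lemma core0_1 : search adjF [:: 0; 2] (iota 0 11) 12 [::] = false. Proof. vm_cast_no_check (erefl false). Qed.
Lemma core0_2 : search adjF [:: 0; 1] (iota 0 11) 12 [::] = false. Proof. vm_cast_no_check (erefl false). Qed.

Lemma adj_trans_all : all (fun c => all (fun a => all (fun b =>
   adjF a b == TA_adj_nat (a + 11*c) (b + 11*c)) (iota 0 11)) (iota 0 11)) (iota 0 3).
Proof. vm_cast_no_check (erefl true). Qed.

Lemma adj_trans c a b : c < 3 -> a < 11 -> b < 11 -> adjF a b = TA_adj_nat (a + 11*c) (b + 11*c).
Proof.
move=> hc ha hb; move/allP: adj_trans_all => /(_ c); rewrite mem_iota hc => /(_ isT).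
move/allP => /(_ a); rewrite mem_iota ha => /(_ isT) /allP /(_ b); rewrite mem_iota hb.
by move=> /(_ isT) /eqP.
Qed.

Definition copyset_dummy := 0.
Definition copyset (c : nat) : {set 'I_34} := [set v : 'I_34 | (nat_of_ord v < 33) && (nat_of_ord v %/ 11 == c)].

Lemma copysetP c (v : 'I_34) : v \in copyset c -> 11 * c <= nat_of_ord v < 11 * c + 11.
Proof. rewrite inE => /andP [h /eqP e]; lia. Qed.

Lemma adj_trans' c (x y : 'I_34) : c < 3 -> x \in copyset c -> y \in copyset c ->
  adjF (x - 11 * c) (y - 11 * c) = TA x y.
Proof.
move=> c3 /copysetP hx /copysetP hy; rewrite (@adj_trans c) //; try lia.
have -> : nat_of_ord x - 11 * c + 11 * c = nat_of_ord x by lia.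
by have -> : nat_of_ord y - 11 * c + 11 * c = nat_of_ord y by lia.
Qed.

Lemma core (c : nat) (i : 'I_3) (ord : 'I_34 -> nat) (cls : 'I_34 -> 'I_3) : c < 3 ->
  strongly_consistent TA (copyset c) ord cls -> (forall v, v \in copyset c -> cls v != i) -> False.
Proof.
move=> c3 [inj sc] avoid.
set s := sort (fun a b => ord a <= ord b) (enum (copyset c)).
have s_sorted : sorted (fun a b => ord a <= ord b) s.
  by apply: sort_sorted => a b; apply: leq_total.
have s_uniq : uniq s by rewrite sort_uniq enum_uniq.
have s_mem : forall v, (v \in s) = (v \in copyset c) by move=> v; rewrite mem_sort mem_enum.
set F := [seq nat_of_ord v - 11 * c | v <- s].
set f := fun a => nat_of_ord (cls (inord (a + 11 * c) : 'I_34)).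
set A := [seq x <- [:: 0; 1; 2] | x != nat_of_ord i].
have nthF : forall x, x < size s -> nth 0 F x = nat_of_ord (nth ord0 s x) - 11 * c.
  by move=> x hx; rewrite (nth_map ord0).
have fnat_of_ord : forall v, v \in copyset c -> f (nat_of_ord v - 11 * c) = nat_of_ord (cls v).
  move=> v /copysetP hv; rewrite /f.
  have -> : nat_of_ord v - 11 * c + 11 * c = nat_of_ord v by lia.
  by rewrite inord_val.
have uF : uniq F.
  rewrite map_inj_in_uniq // => v w; rewrite !s_mem => /copysetP hv /copysetP hw e.
  by apply: ord_inj; lia.
have FL : forall a, (a \in F) = (a \in iota 0 11).
  move=> a; rewrite mem_iota add0n; apply/mapP/idP.
  - by move=> [v]; rewrite s_mem => /copysetP hv ->; lia.
  - move=> ha; exists (inord (a + 11 * c)); last by rewrite inordK; lia.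
    by rewrite s_mem inE inordK; lia.
have Hsearch : search adjF A (iota 0 11) 12 [::] = true.
  apply: (@search_complete adjF A (iota 0 11) F f) => //.
  - move=> i0 j k ij jk; rewrite size_map => ks.
    have is_ : i0 < size s by lia.
    have js : j < size s by lia.
    rewrite !nthF //.
    have vin : forall x, x < size s -> nth ord0 s x \in copyset c.
      by move=> x hx; rewrite -s_mem mem_nth.
    have ltord : forall x y, x < y -> y < size s -> ord (nth ord0 s x) < ord (nth ord0 s y).
      move=> x y xy ys; have xs : x < size s by lia.
      have tr : transitive (fun a b : 'I_34 => ord a <= ord b) by move=> a b d; apply: leq_trans.
      have le := sorted_ltn_nth tr ord0 s_sorted; rewrite /= in le.
      have := le x y xs ys xy; rewrite leq_eqVlt => /orP [/eqP e|//].
      have := inj _ _ (vin x xs) (vin y ys) e.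
      by move/eqP; rewrite nth_uniq // => /eqP; lia.
    have Hsc := sc _ _ _ (vin _ is_) (vin _ js) (vin _ ks) (ltord _ _ ij js) (ltord _ _ jk ks).
    have fa := fnat_of_ord _ (vin _ is_); have fb := fnat_of_ord _ (vin _ js); have fd := fnat_of_ord _ (vin _ ks).
    have ma := vin _ is_; have mb := vin _ js; have md := vin _ ks.
    move: (nth ord0 s i0) (nth ord0 s j) (nth ord0 s k) ma mb md Hsc fa fb fd => va vb vd ma mb md Hsc fa fb fd.
    rewrite fa fb fd (adj_trans' c3 ma md) (adj_trans' c3 mb md) (adj_trans' c3 ma mb).
    move=> hadj; have [h1 h2] := Hsc hadj.
    by split => e; [apply: h1 | apply: h2]; apply: ord_inj.
  - move=> a /mapP [v]; rewrite s_mem => vin ->; rewrite fnat_of_ord // mem_filter.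
    rewrite (inj_eq (@ord_inj _)) avoid //=.
    by case: (cls v) => [[|[|[|]]] ].
  - have sub : {subset F <= iota 0 11} by move=> a; rewrite FL.
    by have := uniq_leq_size uF sub; rewrite size_iota.
move: Hsearch; rewrite /A; clear.
case: i => [[|[|[|n]]] hi]; last by exfalso; clear -hi; lia.
all: move=> H.
- have E : [seq x <- [:: 0; 1; 2] | x != 0] = [:: 1; 2] by [].
  by move: H; rewrite E core0_0.
- have E : [seq x <- [:: 0; 1; 2] | x != 1] = [:: 0; 2] by [].
  by move: H; rewrite E core0_1.
- have E : [seq x <- [:: 0; 1; 2] | x != 2] = [:: 0; 1] by [].
  by move: H; rewrite E core0_2.
Qed.

Definition chk (vs cl : seq nat) : bool :=
  let n := size vs in
  all (fun i => all (fun k => TA_adj_nat (nth 0 vs i) (nth 0 vs k) ==> all (fun j =>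
       (((nth 0 cl (nth 0 vs i) == nth 0 cl (nth 0 vs j)) ==> TA_adj_nat (nth 0 vs j) (nth 0 vs k)) &&
        ((nth 0 cl (nth 0 vs j) == nth 0 cl (nth 0 vs k)) ==> TA_adj_nat (nth 0 vs i) (nth 0 vs j))))
     (iota i.+1 (k - i.+1))) (iota i.+1 (n - i.+1))) (iota 0 n).

Lemma chk_sc (vs cl : seq nat) (X : {set 'I_34}) :
  chk vs cl -> all (fun c => c < 3) cl -> (forall v : 'I_34, v \in X -> nat_of_ord v \in vs) ->
  has_pthin_at_most TA X 3.
Proof.
move=> hc h3 sub.
have cl3 : forall n, nth 0 cl n < 3.
  move=> n; case: (ltnP n (size cl)) => hn; last by rewrite nth_default.
  by move/allP: h3; apply; rewrite mem_nth.
exists (fun v : 'I_34 => index (nat_of_ord v) vs), (fun v : 'I_34 => inord (nth 0 cl (nat_of_ord v)) : 'I_3); split.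
- move=> x y xX yX e; apply: ord_inj.
  by rewrite -(nth_index 0 (sub x xX)) /= e nth_index // sub.
- move=> r s t rX sX tX hrs hst hrt.
  have tv := sub t tX; have rv := sub r rX; have sv := sub s sX.
  rewrite /= in hrs hst hrt.
  have ri := index_mem (nat_of_ord r) vs; have si := index_mem (nat_of_ord s) vs.
  have ti := index_mem (nat_of_ord t) vs.
  rewrite rv in ri; rewrite sv in si; rewrite tv in ti.
  move/allP: hc => /(_ (index (nat_of_ord r) vs)).
  rewrite mem_iota add0n ri => /(_ isT) /allP /(_ (index (nat_of_ord t) vs)).
  rewrite mem_iota (ltn_trans hrs hst) (subnKC ri) ti.
  move=> /(_ isT) /implyP; rewrite !nth_index // => /(_ hrt) /allP /(_ (index (nat_of_ord s) vs)).
  rewrite mem_iota hrs (subnKC (ltn_trans hrs hst)) hst.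
  move=> /(_ isT); rewrite !nth_index // => /andP [h1 h2].
  split => e.
  + apply: (implyP h1); have := congr1 (@nat_of_ord _) e; rewrite !inordK //.
    by move=> ->.
  + apply: (implyP h2); have := congr1 (@nat_of_ord _) e; rewrite !inordK //.
    by move=> ->.
Qed.
Definition sols : seq (seq nat * seq nat) := [::
  ([:: 31; 32; 29; 26; 27; 24; 23; 25; 22; 7; 30; 5; 10; 2; 28; 33; 6; 17; 1; 20; 11; 15; 12; 18; 13; 9; 16; 21; 8; 4; 14; 19; 3], [:: 0; 0; 2; 1; 0; 1; 0; 2; 1; 0; 1; 2; 1; 1; 2; 0; 1; 2; 0; 2; 0; 1; 2; 0; 0; 1; 2; 1; 0; 0; 1; 2; 1; 2]);
  ([:: 15; 20; 14; 19; 18; 13; 11; 16; 21; 17; 12; 28; 33; 6; 24; 23; 29; 30; 22; 25; 26; 31; 10; 27; 32; 5; 2; 7; 0; 8; 4; 3; 9], [:: 2; 0; 0; 2; 0; 2; 1; 1; 1; 0; 2; 1; 0; 2; 0; 0; 2; 1; 2; 2; 2; 2; 1; 0; 1; 0; 0; 1; 0; 2; 2; 2; 1; 2]);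
  ([:: 7; 25; 30; 26; 31; 22; 23; 24; 27; 32; 29; 17; 28; 12; 33; 10; 5; 6; 0; 1; 4; 9; 3; 8; 18; 13; 21; 16; 20; 15; 11; 14; 19], [:: 0; 1; 0; 0; 1; 0; 1; 1; 1; 1; 0; 2; 2; 0; 0; 1; 0; 1; 0; 2; 1; 1; 1; 0; 2; 0; 0; 1; 0; 2; 1; 2; 1; 1]);
  ([:: 19; 13; 14; 18; 16; 11; 12; 21; 15; 20; 17; 6; 33; 1; 10; 5; 28; 4; 0; 9; 30; 23; 2; 7; 25; 8; 29; 22; 24; 26; 31; 27; 32], [:: 2; 2; 2; 0; 0; 0; 0; 2; 2; 0; 0; 1; 0; 1; 2; 1; 2; 0; 0; 0; 1; 2; 1; 1; 0; 0; 0; 1; 1; 2; 0; 0; 2; 1]);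
  ([:: 8; 7; 3; 5; 0; 10; 2; 9; 21; 16; 18; 1; 13; 6; 17; 11; 33; 12; 14; 15; 20; 28; 19; 23; 30; 25; 31; 22; 26; 27; 29; 32; 24], [:: 1; 1; 0; 2; 0; 2; 1; 0; 1; 2; 2; 2; 1; 0; 1; 2; 2; 1; 0; 1; 2; 2; 2; 2; 0; 1; 0; 0; 0; 2; 1; 0; 1; 0]);
  ([:: 18; 13; 20; 15; 19; 11; 9; 14; 12; 16; 21; 4; 17; 33; 6; 1; 0; 2; 3; 7; 8; 32; 27; 28; 23; 30; 24; 25; 26; 22; 31; 29; 10], [:: 2; 0; 0; 2; 2; 0; 0; 0; 2; 2; 2; 0; 1; 0; 1; 2; 0; 1; 2; 1; 2; 0; 2; 0; 0; 1; 1; 2; 1; 2; 1; 1; 0; 1]);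
  ([:: 15; 20; 18; 11; 13; 21; 16; 12; 17; 14; 33; 28; 19; 10; 23; 9; 4; 5; 1; 0; 3; 2; 8; 7; 31; 26; 30; 25; 22; 29; 24; 32; 27], [:: 1; 2; 1; 2; 1; 2; 0; 1; 2; 1; 2; 1; 2; 2; 2; 1; 2; 0; 2; 2; 2; 0; 0; 0; 1; 1; 1; 0; 0; 2; 2; 2; 1; 1]);
  ([:: 18; 20; 13; 15; 14; 16; 11; 21; 19; 17; 12; 33; 1; 6; 28; 10; 5; 0; 2; 4; 9; 23; 8; 3; 30; 32; 25; 22; 27; 26; 31; 29; 24], [:: 2; 2; 1; 2; 1; 1; 1; 0; 1; 1; 1; 2; 2; 1; 0; 0; 1; 1; 1; 0; 0; 1; 0; 0; 0; 1; 1; 2; 0; 1; 1; 2; 2; 0]);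
  ([:: 21; 18; 11; 13; 16; 20; 15; 19; 14; 10; 5; 7; 2; 3; 4; 12; 0; 9; 1; 33; 6; 17; 32; 28; 23; 27; 22; 26; 31; 25; 29; 30; 24], [:: 1; 1; 0; 0; 0; 1; 0; 0; 0; 0; 0; 2; 2; 0; 0; 0; 1; 2; 2; 1; 1; 1; 2; 2; 2; 1; 0; 0; 1; 0; 1; 0; 0; 1]);
  ([:: 18; 13; 19; 14; 20; 15; 21; 11; 8; 3; 16; 12; 10; 5; 17; 0; 4; 2; 7; 1; 6; 33; 23; 28; 29; 24; 25; 22; 30; 31; 26; 32; 27], [:: 0; 0; 2; 0; 2; 2; 2; 2; 0; 0; 2; 1; 1; 0; 0; 0; 2; 1; 1; 2; 2; 2; 2; 2; 1; 0; 1; 1; 1; 1; 0; 0; 2; 1]);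
  ([:: 24; 29; 32; 27; 22; 25; 30; 9; 26; 31; 4; 7; 2; 5; 0; 1; 23; 28; 6; 33; 3; 21; 16; 17; 12; 8; 13; 11; 18; 19; 15; 14; 20], [:: 2; 1; 1; 2; 2; 1; 1; 1; 2; 2; 0; 1; 0; 0; 1; 0; 1; 0; 2; 2; 0; 1; 0; 0; 1; 1; 1; 1; 0; 0; 2; 1; 2; 0]);
  ([:: 3; 8; 15; 20; 4; 9; 2; 0; 7; 18; 13; 19; 14; 5; 10; 1; 6; 12; 33; 26; 17; 28; 31; 23; 22; 30; 25; 27; 32; 24; 29; 16; 21], [:: 0; 0; 1; 0; 2; 1; 0; 2; 2; 1; 1; 0; 1; 2; 2; 2; 2; 1; 2; 2; 1; 1; 0; 2; 2; 2; 2; 2; 1; 2; 1; 0; 1; 0]);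
  ([:: 18; 13; 15; 20; 16; 21; 14; 11; 5; 10; 19; 7; 2; 0; 3; 8; 4; 17; 9; 33; 6; 1; 29; 28; 24; 22; 23; 25; 30; 26; 27; 32; 31], [:: 0; 0; 2; 2; 1; 0; 1; 2; 2; 1; 1; 1; 0; 0; 2; 0; 0; 2; 0; 2; 2; 2; 0; 2; 0; 1; 2; 0; 1; 0; 1; 2; 0; 2]);
  ([:: 10; 9; 4; 0; 5; 3; 2; 8; 1; 7; 6; 28; 33; 17; 12; 19; 14; 11; 16; 21; 15; 20; 27; 32; 29; 24; 23; 26; 22; 31; 25; 18; 30], [:: 2; 2; 1; 0; 2; 1; 0; 1; 0; 2; 1; 1; 1; 0; 0; 1; 0; 1; 0; 0; 0; 0; 0; 2; 1; 1; 1; 0; 2; 1; 1; 2; 1; 1]);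
  ([:: 10; 8; 3; 2; 0; 7; 5; 4; 1; 9; 6; 20; 15; 19; 18; 13; 11; 16; 12; 17; 21; 32; 33; 27; 28; 23; 22; 26; 31; 24; 29; 25; 30], [:: 1; 1; 0; 1; 2; 2; 2; 0; 1; 0; 2; 1; 1; 0; 0; 1; 0; 1; 0; 0; 0; 0; 2; 1; 0; 2; 1; 0; 1; 0; 1; 1; 0; 2]);
  ([:: 4; 9; 20; 7; 8; 2; 3; 0; 5; 1; 6; 17; 10; 21; 33; 12; 11; 16; 14; 13; 28; 18; 19; 29; 23; 24; 32; 25; 22; 27; 30; 31; 26], [:: 2; 1; 1; 0; 2; 0; 1; 1; 0; 1; 0; 1; 1; 1; 0; 0; 0; 1; 1; 0; 1; 0; 2; 2; 0; 0; 1; 1; 2; 1; 0; 0; 1; 2]);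
  ([:: 25; 30; 32; 22; 27; 26; 24; 31; 29; 28; 21; 23; 19; 18; 13; 14; 15; 11; 12; 20; 33; 17; 6; 1; 8; 3; 5; 0; 10; 4; 9; 7; 2], [:: 1; 0; 1; 2; 2; 2; 0; 2; 2; 0; 0; 2; 2; 2; 1; 1; 0; 2; 2; 1; 1; 1; 2; 2; 0; 2; 1; 0; 0; 0; 0; 1; 1; 0]);
  ([:: 19; 18; 13; 14; 21; 16; 12; 11; 20; 15; 31; 25; 30; 22; 26; 24; 29; 28; 27; 32; 23; 33; 6; 1; 8; 3; 10; 5; 2; 7; 4; 0; 9], [:: 2; 2; 0; 0; 1; 0; 1; 1; 0; 0; 1; 1; 0; 1; 2; 2; 0; 0; 1; 0; 0; 0; 2; 2; 0; 2; 0; 1; 0; 0; 1; 0; 1; 2]);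
  ([:: 2; 1; 7; 10; 5; 4; 0; 3; 8; 9; 6; 19; 33; 14; 28; 17; 11; 12; 13; 15; 16; 20; 30; 25; 21; 23; 24; 22; 29; 26; 31; 32; 27], [:: 2; 1; 2; 2; 0; 0; 1; 0; 2; 0; 0; 1; 0; 0; 1; 0; 1; 0; 0; 2; 0; 1; 0; 2; 1; 0; 1; 1; 2; 2; 0; 2; 2; 0]);
  ([:: 3; 8; 10; 0; 4; 9; 5; 2; 20; 15; 7; 18; 13; 14; 1; 6; 12; 33; 11; 17; 16; 28; 23; 21; 32; 22; 27; 24; 26; 31; 25; 30; 29], [:: 2; 2; 0; 2; 1; 0; 2; 0; 1; 1; 0; 1; 0; 0; 0; 1; 1; 0; 0; 0; 1; 0; 1; 2; 2; 1; 0; 2; 2; 2; 1; 0; 0; 2]);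
  ([:: 7; 4; 9; 1; 2; 3; 0; 5; 6; 8; 33; 10; 17; 12; 28; 21; 16; 15; 11; 13; 14; 19; 31; 26; 23; 18; 24; 29; 32; 27; 25; 22; 30], [:: 0; 2; 1; 1; 2; 0; 2; 1; 1; 0; 0; 0; 0; 1; 0; 1; 1; 1; 1; 0; 0; 1; 0; 2; 2; 2; 0; 1; 2; 1; 0; 0; 1; 2]);
  ([:: 7; 2; 10; 0; 5; 4; 9; 3; 1; 8; 15; 20; 6; 19; 14; 16; 12; 11; 17; 33; 13; 28; 23; 18; 26; 31; 22; 24; 29; 30; 25; 27; 32], [:: 2; 2; 2; 0; 0; 1; 2; 2; 0; 1; 0; 1; 0; 1; 0; 1; 0; 0; 1; 0; 0; 0; 2; 2; 1; 1; 1; 2; 0; 0; 0; 0; 2; 2]);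
  ([:: 18; 13; 27; 32; 16; 21; 11; 15; 20; 17; 12; 14; 19; 26; 31; 30; 25; 6; 33; 28; 23; 24; 29; 1; 10; 8; 5; 0; 3; 9; 2; 7; 4], [:: 0; 0; 2; 2; 0; 1; 0; 2; 2; 1; 1; 0; 1; 0; 1; 2; 1; 2; 2; 0; 2; 2; 0; 2; 1; 0; 0; 1; 1; 2; 1; 0; 1; 2]);
  ([:: 19; 14; 16; 21; 18; 13; 11; 15; 17; 12; 28; 20; 6; 33; 2; 1; 7; 5; 10; 4; 0; 9; 3; 8; 32; 24; 27; 29; 22; 26; 25; 30; 31], [:: 2; 1; 2; 1; 0; 1; 0; 0; 2; 0; 0; 0; 0; 2; 1; 2; 1; 1; 2; 0; 2; 2; 2; 0; 2; 2; 1; 0; 0; 1; 2; 0; 1; 1]);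
  ([:: 8; 10; 5; 3; 2; 0; 7; 4; 9; 27; 32; 29; 31; 26; 23; 22; 25; 30; 28; 6; 1; 33; 17; 19; 12; 14; 18; 13; 11; 16; 15; 21; 20], [:: 1; 1; 2; 0; 2; 2; 0; 0; 0; 0; 1; 2; 2; 1; 0; 2; 1; 2; 1; 0; 1; 0; 0; 2; 0; 0; 2; 0; 2; 2; 0; 2; 2; 2]);
  ([:: 21; 16; 19; 14; 18; 11; 15; 20; 13; 29; 12; 31; 24; 26; 22; 23; 17; 28; 27; 32; 30; 33; 10; 6; 9; 5; 1; 4; 3; 0; 2; 7; 8], [:: 2; 0; 2; 0; 1; 2; 0; 2; 1; 1; 2; 2; 0; 0; 1; 1; 2; 0; 0; 0; 1; 0; 1; 2; 1; 0; 2; 1; 2; 1; 1; 2; 1; 0]);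
  ([:: 20; 15; 21; 16; 11; 19; 14; 13; 18; 32; 27; 29; 24; 23; 22; 25; 30; 31; 28; 12; 33; 17; 10; 6; 1; 9; 4; 0; 5; 7; 2; 3; 8], [:: 0; 0; 1; 0; 2; 1; 2; 2; 1; 2; 1; 1; 1; 2; 2; 0; 2; 0; 2; 0; 0; 2; 2; 0; 0; 2; 0; 2; 0; 0; 2; 2; 2; 2]);
  ([:: 5; 10; 4; 9; 0; 2; 7; 3; 8; 1; 6; 33; 28; 23; 30; 22; 25; 26; 31; 24; 29; 13; 18; 17; 20; 11; 12; 16; 15; 19; 14; 32; 21], [:: 2; 2; 0; 0; 0; 2; 0; 1; 0; 1; 0; 2; 1; 2; 0; 0; 1; 1; 0; 2; 0; 1; 2; 2; 2; 0; 0; 0; 2; 0; 0; 0; 0; 1]);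
  ([:: 27; 31; 32; 26; 23; 22; 30; 24; 29; 25; 19; 14; 20; 15; 11; 16; 21; 17; 12; 13; 33; 18; 7; 2; 1; 6; 8; 3; 0; 10; 5; 9; 4], [:: 2; 1; 1; 0; 0; 0; 0; 1; 0; 2; 1; 2; 0; 0; 2; 0; 1; 1; 1; 1; 1; 1; 2; 0; 0; 2; 0; 1; 0; 0; 1; 0; 2; 2]);
  ([:: 9; 4; 8; 0; 2; 3; 7; 10; 5; 6; 1; 31; 33; 28; 23; 26; 24; 22; 27; 17; 12; 25; 30; 19; 14; 32; 18; 13; 16; 11; 21; 20; 15], [:: 2; 2; 1; 0; 1; 0; 1; 1; 0; 0; 1; 2; 2; 0; 1; 2; 1; 2; 0; 1; 0; 0; 1; 1; 0; 1; 0; 0; 1; 0; 1; 0; 0; 2]);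
  ([:: 14; 20; 19; 11; 16; 21; 18; 15; 12; 13; 17; 31; 26; 28; 33; 23; 25; 24; 22; 6; 29; 27; 32; 1; 8; 3; 5; 10; 2; 0; 4; 7; 9], [:: 0; 0; 1; 1; 0; 1; 0; 1; 1; 2; 2; 2; 1; 2; 0; 1; 0; 0; 0; 2; 1; 0; 1; 2; 2; 2; 1; 1; 2; 2; 0; 1; 2; 0]);
  ([:: 19; 14; 18; 13; 12; 16; 11; 15; 21; 20; 9; 17; 4; 10; 5; 1; 33; 0; 6; 28; 2; 7; 3; 23; 8; 24; 29; 22; 25; 30; 26; 32; 27], [:: 0; 1; 2; 0; 0; 1; 1; 2; 2; 0; 1; 0; 2; 2; 0; 0; 1; 2; 2; 1; 0; 1; 0; 1; 1; 1; 1; 1; 1; 2; 2; 0; 0; 2]);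
  ([:: 7; 9; 4; 0; 2; 1; 5; 10; 8; 3; 31; 29; 26; 24; 27; 22; 6; 23; 25; 30; 20; 28; 33; 17; 15; 11; 12; 13; 18; 14; 19; 21; 16], [:: 0; 1; 2; 0; 0; 2; 1; 2; 2; 0; 2; 2; 1; 1; 1; 2; 2; 0; 0; 0; 2; 1; 2; 0; 0; 2; 2; 0; 0; 0; 2; 2; 0; 1]);
  ([:: 28; 23; 25; 30; 24; 29; 32; 22; 27; 26; 31; 11; 12; 17; 14; 19; 21; 16; 15; 20; 18; 6; 13; 1; 7; 2; 8; 3; 0; 4; 5; 10; 9], [:: 1; 1; 2; 2; 2; 0; 1; 2; 0; 2; 0; 0; 2; 0; 2; 2; 2; 1; 2; 1; 2; 1; 0; 0; 1; 1; 1; 1; 2; 2; 2; 1; 2; 0])].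

Definition sol_good (x : nat) : bool :=
  let p := nth ([::], [::]) sols x in
  [&& chk p.1 p.2, all (fun c => c < 3) p.2 & all (fun v => (v == x) || (v \in p.1)) (iota 0 34)].

Lemma sols_all : all sol_good (iota 0 34).
Proof. vm_cast_no_check (erefl true). Qed.

Lemma upper (x : 'I_34) (X : {set 'I_34}) : x \notin X -> has_pthin_at_most TA X 3.
Proof.
move=> xX.
have := allP sols_all x; rewrite mem_iota add0n ltn_ord => /(_ isT) /and3P [h1 h2 h3].
apply: (chk_sc h1 h2) => v vX.
have := allP h3 v; rewrite mem_iota add0n ltn_ord => /(_ isT) /orP [/eqP e|//].
by move: xX; rewrite (_ : x = v) ?vX //; apply: ord_inj.
Qed.

Definition incopy (c a : nat) : bool := (a < 33) && (a %/ 11 == c).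

Lemma cross_all : all (fun c => all (fun a => all (fun b =>
   TA_adj_nat a b ==> incopy c a ==> ~~ incopy c b ==> (a == 11 * c + 6) && (b == 33))
   (iota 0 34)) (iota 0 34)) (iota 0 3).
Proof. vm_cast_no_check (erefl true). Qed.

Lemma cross c (a b : 'I_34) : c < 3 -> TA a b -> a \in copyset c -> b \notin copyset c ->
  nat_of_ord a = 11 * c + 6 /\ nat_of_ord b = 33.
Proof.
move=> hc hab ha hb; move/allP: cross_all => /(_ c); rewrite mem_iota hc => /(_ isT).
move/allP => /(_ a); rewrite mem_iota ltn_ord => /(_ isT) /allP /(_ b).
rewrite mem_iota ltn_ord => /(_ isT).
have hab' : TA_adj_nat a b := hab.
move: ha hb; rewrite !inE /incopy => -> /negbTE -> ; rewrite hab' /=.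
by case/andP => /eqP -> /eqP ->.
Qed.

Section Part1.
Variable cls : 'I_34 -> 'I_3.
Variable i : 'I_3.
Let X := [set v | cls v == i].
Let e' := fun u v => [&& TA u v, u \in X & v \in X].

Lemma cross_path c : c < 3 -> forall p (a : 'I_34), a \in copyset c -> path e' a p ->
  last a p \notin copyset c ->
  exists2 w : 'I_34, nat_of_ord w = 11 * c + 6 & (w \in X) /\ (exists2 z : 'I_34, nat_of_ord z = 33 & z \in X).
Proof.
move=> hc; elim=> [|y p IH] a ha /=; first by rewrite ha.
case/andP => /and3P [hay aX yX] hp hl.
case: (boolP (y \in copyset c)) => hy; first exact: IH hy hp hl.
have [e1 e2] := cross hc hay ha hy.
by exists a => //; split => //; exists y.
Qed.
End Part1.

Definition V c : 'I_34 := inord (11 * c + 6).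
Definition V33 : 'I_34 := inord 33.

Lemma nat_V c : c < 3 -> nat_of_ord (V c) = 11 * c + 6.
Proof. by move=> h; rewrite inordK //; lia. Qed.
Lemma nat_V33 : nat_of_ord V33 = 33.
Proof. by rewrite inordK. Qed.

Lemma exists_in_copy c (i : 'I_3) (ord : 'I_34 -> nat) (cls : 'I_34 -> 'I_3) : c < 3 ->
  strongly_consistent TA [set: 'I_34] ord cls -> exists2 v, v \in copyset c & cls v = i.
Proof.
move=> hc [inj sc].
case: (boolP [exists v, (v \in copyset c) && (cls v == i)]) => [/existsP [v /andP [h /eqP e]]|].
  by exists v.
rewrite negb_exists => /forallP H; exfalso.
apply: (@core c i ord cls hc) => [|v vin]; last by have := H v; rewrite vin.
split; first by move=> x y _ _; apply: inj; rewrite inE.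
by move=> r s t _ _ _; apply: sc; rewrite inE.
Qed.

Lemma two_side (ord : 'I_34 -> nat) (cls : 'I_34 -> 'I_3) (a b m : 'I_34) :
  strongly_consistent TA [set: 'I_34] ord cls ->
  a != b -> a != m -> b != m -> ~~ TA a b -> ~~ TA b a -> TA m a -> TA a m -> TA m b -> TA b m ->
  cls a = cls m -> cls b = cls m -> (ord m < ord a) = (ord m < ord b) -> False.
Proof.
move=> [inj sc] ab am bm nab nba ma am' mb bm' ca cb.
have injn : forall x y, x != y -> ord x != ord y.
  by move=> x y; apply: contra => /eqP e; apply/eqP; apply: inj; rewrite ?inE.
have Ha := injn _ _ am; have Hb := injn _ _ bm; have Hab := injn _ _ ab.
have T := fun x y z => sc x y z (in_setT x) (in_setT y) (in_setT z).
case: (ltngtP (ord m) (ord a)) => h1; case: (ltngtP (ord m) (ord b)) => h2 //; try by move: Ha; rewrite h1 eqxx.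
all: try by move: Hb; rewrite h2 eqxx.
- move=> _; case: (ltngtP (ord a) (ord b)) => h3.
  + by have [h _] := T _ _ _ h1 h3 mb; move: (h (esym ca)); rewrite (negbTE nab).
  + by have [h _] := T _ _ _ h2 h3 ma; move: (h (esym cb)); rewrite (negbTE nba).
  + by move: Hab; rewrite h3 eqxx.
- move=> _; case: (ltngtP (ord a) (ord b)) => h3.
  + by have [_ h] := T _ _ _ h3 h2 am'; move: (h (etrans cb (esym (erefl _)))); rewrite (negbTE nab).
  + by have [_ h] := T _ _ _ h3 h1 bm'; move: (h ca); rewrite (negbTE nba).
  + by move: Hab; rewrite h3 eqxx.
Qed.

Lemma part1 (ord : 'I_34 -> nat) (cls : 'I_34 -> 'I_3) :
  strongly_consistent TA [set: 'I_34] ord cls ->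
  forall i : 'I_3, ~ induced_connected TA [set v | cls v == i].
Proof.
move=> sc i [_ conn].
have [v0 h0 c0] := @exists_in_copy 0 i ord cls isT sc.
have [v1 h1 c1] := @exists_in_copy 1 i ord cls isT sc.
have [v2 h2 c2] := @exists_in_copy 2 i ord cls isT sc.
have inX : forall v, cls v = i -> v \in [set v | cls v == i] by move=> v e; rewrite inE e.
have notin : forall c d (v : 'I_34), v \in copyset c -> c != d -> v \notin copyset d.
  move=> c d v; rewrite !inE => /andP [_ /eqP e] cd; apply/negP => /andP [_ /eqP e']; move: cd.
  by rewrite -e -e' eqxx.
have step : forall c d (v w : 'I_34), c < 3 -> v \in copyset c -> w \in copyset d -> c != d ->
    cls v = i -> cls w = i ->
    (exists2 u : 'I_34, nat_of_ord u = 11 * c + 6 & cls u = i) /\ (exists2 z : 'I_34, nat_of_ord z = 33 & cls z = i).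
  move=> c d v w hc hv hw cd cv cw.
  have := conn v w (inX _ cv) (inX _ cw) => /connectP [p hp hl].
  have := cross_path hc hv hp; rewrite -hl => /(_ (notin _ _ _ hw _)).
  rewrite eq_sym cd => /(_ isT) [u hu [uX [z hz zX]]].
  rewrite !inE in uX zX.
  by split; [exists u => //; apply/eqP | exists z => //; apply/eqP].
have [[u0 hu0 cu0] [z hz cz]] := step 0 1 v0 v1 isT h0 h1 isT c0 c1.
have [[u1 hu1 cu1] _] := step 1 2 v1 v2 isT h1 h2 isT c1 c2.
have [[u2 hu2 cu2] _] := step 2 0 v2 v0 isT h2 h0 isT c2 c0.
have ev : forall (x : 'I_34) n, nat_of_ord x = n -> x = inord n.
  by move=> x n <-; rewrite inord_val.
move: hu0 hu1 hu2 hz => /ev -> /ev -> /ev -> /ev -> in cu0 cu1 cu2 cz.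
have S := @two_side ord cls.
have k01 := S (inord 6) (inord 17) (inord 33) sc.
have k02 := S (inord 6) (inord 28) (inord 33) sc.
have k12 := S (inord 17) (inord 28) (inord 33) sc.
rewrite cu0 cu1 cu2 cz in k01 k02 k12.
have E : forall a b : nat, a < 34 -> b < 34 -> ((inord a : 'I_34) != inord b) = (a != b).
  by move=> a b ha hb; rewrite -(inj_eq (@ord_inj _)) !inordK.
have F : forall a b : nat, a < 34 -> b < 34 -> TA (inord a) (inord b) = TA_adj_nat a b.
  by move=> a b ha hb; rewrite /TA !inordK.
rewrite !E // !F // in k01 k02 k12.
have := k01 isT isT isT isT isT isT isT isT isT erefl erefl.
have := k02 isT isT isT isT isT isT isT isT isT erefl erefl.
have := k12 isT isT isT isT isT isT isT isT isT erefl erefl.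
case: (ord (inord 33) < ord (inord 6)); case: (ord (inord 33) < ord (inord 17));
  case: (ord (inord 33) < ord (inord 28)) => h12 h02 h01; by [apply: h12|apply: h02|apply: h01].
Qed.

Definition lab (v : 'I_34) : nat := nat_of_ord v %/ 11.

Lemma edge_lab_all : all (fun a => all (fun b =>
  TA_adj_nat a b ==> (a != 33) ==> (b != 33) ==> (a %/ 11 == b %/ 11)) (iota 0 34)) (iota 0 34).
Proof. vm_cast_no_check (erefl true). Qed.

Lemma edge_lab (a b : 'I_34) : TA a b -> nat_of_ord a != 33 -> nat_of_ord b != 33 -> lab a = lab b.
Proof.
move=> hab ha hb; move/allP: edge_lab_all => /(_ a); rewrite mem_iota ltn_ord => /(_ isT) /allP /(_ b).
rewrite mem_iota ltn_ord => /(_ isT).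
have hab' : TA_adj_nat a b := hab.
by rewrite hab' ha hb => /eqP.
Qed.

Lemma nocut : forall p (x : 'I_34), path TA x p -> all (fun v : 'I_34 => nat_of_ord v != 33) (x :: p) ->
  all (fun v => lab v == lab x) p.
Proof.
elim=> [//|y q IH] x /= /andP [hxy hq] /and3P [hx hy hall].
have e := edge_lab hxy hx hy.
rewrite -e eqxx /=.
have := IH y hq; rewrite /= hy hall => /(_ isT).
by rewrite -e.
Qed.

Lemma labs : forall p (x : 'I_34), path TA x p -> uniq (x :: p) ->
  exists c1 c2, forall v, v \in x :: p -> nat_of_ord v = 33 \/ lab v = c1 \/ lab v = c2.
Proof.
elim=> [|y q IH] x.
  by move=> _ _; exists (lab x), (lab x) => v; rewrite inE => /eqP ->; right; left.
rewrite /= => /andP [hxy hq] /andP [hxn hu].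
case: (nat_of_ord x =P 33) => hx.
  have [c1 [c2 H]] := IH y hq hu; exists c1, c2 => v; rewrite inE => /orP [/eqP ->|hv].
    by left.
  exact: H.
case: (nat_of_ord y =P 33) => hy.
  case/andP: hu => hyq _.
  have q33 : all (fun v : 'I_34 => nat_of_ord v != 33) q.
    apply/allP => v vq; apply/negP => /eqP e.
    have ev : v = y by apply: ord_inj; rewrite e hy.
    by move: hyq; rewrite -ev vq.
  clear IH; case: q hq hyq q33 hxn => [|z q'] hq hyq q33 hxn.
    exists (lab x), (lab x) => v; rewrite !inE => /orP [/eqP ->|/eqP ->]; [by right; left | by left].
  move: hq => /= /andP [_ hq'].
  have := nocut hq' q33.
  move/allP => H; exists (lab x), (lab z) => v; rewrite !inE => /orP [/eqP ->|/orP [/eqP ->|/orP [/eqP ->|vq]]].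
  - by right; left.
  - by left.
  - by right; right.
  - by right; right; apply/eqP; apply: H.
have [c1 [c2 H]] := IH y hq hu.
have ey := edge_lab hxy (introN eqP hx) (introN eqP hy).
exists c1, c2 => v; rewrite inE => /orP [/eqP ->|hv]; last exact: H.
rewrite ey; case: (H y (mem_head _ _)) => [e|[->|->]]; [by move: hy; rewrite e | by right; left | by right; right].
Qed.

Lemma avoid_copy (x : 'I_34) p : path TA x p -> uniq (x :: p) ->
  exists2 c, c < 3 & copyset c \subset ~: [set v | v \in x :: p].
Proof.
move=> hp hu; have [c1 [c2 H]] := labs hp hu.
have [c [hc h1 h2]] : exists c, [/\ c < 3, c != c1 & c != c2].
  case: (boolP ((0 != c1) && (0 != c2))) => [/andP [a b]|h]; first by exists 0.
  case: (boolP ((1 != c1) && (1 != c2))) => [/andP [a b]|h']; first by exists 1.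
  exists 2; split => //; lia.
exists c => //; apply/subsetP => v; rewrite !inE => /andP [h33 /eqP hc'].
apply/negP => vin; case: (H v vin) => [e|[e|e]].
- by move: h33; rewrite e.
- by move: h1; rewrite -e /lab hc' eqxx.
- by move: h2; rewrite -e /lab hc' eqxx.
Qed.

Lemma lower (X : {set 'I_34}) c : c < 3 -> copyset c \subset X -> forall j, j < 3 -> ~ has_pthin_at_most TA X j.
Proof.
move=> hc sub j hj [ord [cls [inj sc]]].
have hj3 : j <= 3 by apply: ltnW.
pose cls3 := fun v => widen_ord hj3 (cls v).
apply: (@core c (@Ordinal 3 2 isT) ord cls3 hc); last first.
  move=> v _; rewrite -(inj_eq (@ord_inj _)) /=; have := ltn_ord (cls v); lia.
have subP := subsetP sub.
split.
  by move=> a b ha hb; apply: inj; apply: subP.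
move=> r s t hr hs ht h1 h2 hrt.
have [k1 k2] := sc r s t (subP _ hr) (subP _ hs) (subP _ ht) h1 h2 hrt.
split => e; [apply: k1 | apply: k2]; apply: ord_inj; exact: (congr1 (@nat_of_ord _) e).
Qed.

Unset Implicit Arguments.
Theorem proposition7 (ord : 'I_34 -> nat) (cls : 'I_34 -> 'I_3) :
  (forall i : 'I_3, exists v, cls v = i) ->
  strongly_consistent TA [set: 'I_34] ord cls ->
  (forall i : 'I_3, ~ induced_connected TA [set v | cls v == i]) /\
  (forall (x : 'I_34) (p : seq 'I_34), path TA x p -> uniq (x :: p) ->
     pthin_eq TA (~: [set v | v \in x :: p]) 3).
Proof.
move=> _ sc; split; first exact: part1 sc.
move=> x p hp hu; split.
  by apply: (@upper x); rewrite !inE eqxx.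
have [c hc sub] := avoid_copy hp hu.
exact: lower hc sub.
Qed.
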